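(* For every $\theta\in V_\Lambda$, the classes $\mathcal P(\theta)$ and $\overline{\mathcal P}(\theta)$ are pseudo-torsion classes in $\mathcal G$. Moreover, each of them is closed under arbitrary extensions in $\mathrm{mod}\text-\Lambda$ (if $0\to A\to B\to C\to 0$ is exact with $A,C$ in the class then $B$ is in the class); in particular they are closed under direct sums.
   Context: Let $\Lambda$ be a finite dimensional algebra over a field with $n$ isoclasses of simple modules, and $\mathrm{mod}\text-\Lambda$ the category of finitely generated right $\Lambda$-modules. Fix a torsion class $\mathcal G\subseteq\mathrm{mod}\text-\Lambda$ (closed under isomorphisms, extensions and quotients). For $B\in\mathcal G$, a subobject of $B$ is a submodule in $\mathcal G$; a subobject $A\subseteq B$ is strict if $A\cap B'\in\mathcal G$ for every subobject $B'$ of $B$; a strict quotient of $B$ is $B/A$ with $A$ a strict subobject. A short exact sequence $0\to A\to B\to C\to 0$ in $\mathcal G$ is strict exact if $A$ is a strict subobject of $B$. A pseudo-torsion class is a nonempty class $\mathcal P\subseteq\mathcal G$ closed under strict quotients and strict extensions. Let $K_0\Lambda\cong\mathbb Z^n$ and $V_\Lambda=\mathrm{Hom}_{\mathbb Z}(K_0\Lambda,\mathbb R)\cong\mathbb R^n$; for $\theta\in V_\Lambda$ and a module $M$, $\theta(M)$ denotes $\theta$ applied to the dimension vector (composition-factor multiplicities) of $M$. Define $\mathcal P(\theta)$ as the class consisting of $0$ and all nonzero $M\in\mathcal G$ with $\theta(M'')>0$ for every nonzero strict quotient $M''$ of $M$ (including $M''=M$); and $\overline{\mathcal P}(\theta)$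 as the class of $M\in\mathcal G$ with $\theta(M'')\ge 0$ for every strict quotient $M''$ of $M$. *)

(* Defs.v *)
From HB Require Import structures.
From mathcomp Require Import all_boot all_order all_algebra.
From mathcomp Require Import falgebra.
From mathcomp Require Import reals.
Set Implicit Arguments. Unset Strict Implicit. Unset Printing Implicit Defensive.
Import Order.TTheory GRing.Theory Num.Theory.
Local Open Scope ring_scope.

(* A finitely generated right L-module is (up to isomorphism) a finite
   dimensional F-space F^d (row vectors) with a right action
   v . a := v *m fact a, where fact is a unital F-algebra morphism
   L -> 'M_d (row vectors give right modules: fact (a*b) = fact a *m fact b). *)
Record fmod (F : fieldType) (L : falgType F) := FMod {
  fdim : nat;
  fact : L -> 'M[F]_fdim;
  fact_lin : forall (k : F) (a b : L), fact (k *: a + b) = k *: fact a + fact b;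
  fact_one : fact 1 = 1%:M;
  fact_mul : forall a b : L, fact (a * b) = fact a *m fact b
}.

Section Modules.
Variables (F : fieldType) (L : falgType F).
Local Notation mod := (fmod L).

Definition is_hom (M N : mod) (f : 'M[F]_(fdim M, fdim N)) : Prop :=
  forall a : L, fact M a *m f = f *m fact N a.

Definition ses (A B C : mod) (f : 'M[F]_(fdim A, fdim B))
  (g : 'M[F]_(fdim B, fdim C)) : Prop :=
  [/\ is_hom f, is_hom g, row_free f, row_full g & (f == kermx g)%MS].

Definition isomorphic (M N : mod) : Prop :=
  exists f : 'M[F]_(fdim M, fdim N), [/\ is_hom f, row_free f & row_full f].

Definition sub_in (C : mod -> Prop) (B : mod) m (U : 'M[F]_(m, fdim B)) : Prop :=
  exists (M : mod) (f : 'M[F]_(fdim M, fdim B)),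
    [/\ is_hom f, row_free f, (f == U)%MS & C M].

Definition is_quot (B Q : mod) m (U : 'M[F]_(m, fdim B))
  (g : 'M[F]_(fdim B, fdim Q)) : Prop :=
  [/\ is_hom g, row_full g & (kermx g == U)%MS].

Section Torsion.
Variable G : mod -> Prop.

Definition torsion_class : Prop :=
  [/\ (exists M, G M),
      (forall M N, isomorphic M N -> G M -> G N),
      (forall A B C f g, @ses A B C f g -> G A -> G C -> G B) &
      (forall (B Q : mod) (g : 'M[F]_(fdim B, fdim Q)),
          is_hom g -> row_full g -> G B -> G Q)].

Definition subobj (B : mod) m (U : 'M[F]_(m, fdim B)) : Prop := sub_in G U.

Definition strict_subobj (B : mod) m (U : 'M[F]_(m, fdim B)) : Prop :=
  subobj U /\
  forall m' (U' : 'M[F]_(m', fdim B)), subobj U' -> subobj (U :&: U')%MS.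

Definition strict_quot (B Q : mod) : Prop :=
  exists m (U : 'M[F]_(m, fdim B)) (g : 'M[F]_(fdim B, fdim Q)),
    strict_subobj U /\ is_quot U g.

Definition strict_ses (A B C : mod) f g : Prop :=
  [/\ @ses A B C f g, G A, G B, G C & strict_subobj f].

Definition pseudo_torsion (P : mod -> Prop) : Prop :=
  [/\ (exists M, P M),
      (forall M, P M -> G M),
      (forall M Q, P M -> strict_quot M Q -> P Q) &
      (forall A B C f g, @strict_ses A B C f g -> P A -> P C -> P B)].

Section Theta.
Variables (R : realType) (theta : mod -> R).

(* elements of V_L = Hom(K_0 L, R): additive functions on short exact sequences *)
Definition additive_fun : Prop :=
  forall A B C f g, @ses A B C f g -> theta B = theta A + theta C.

Definition Pth (M : mod) : Prop :=
  G M /\ forall Q, strict_quot M Q -> (0 < fdim Q)%N -> 0 < theta Q.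

Definition Pbar (M : mod) : Prop :=
  G M /\ forall Q, strict_quot M Q -> 0 <= theta Q.
End Theta.
End Torsion.

Definition ext_closed (P : mod -> Prop) : Prop :=
  forall A B C f g, @ses A B C f g -> P A -> P C -> P B.

Definition is_dsum (A C B : mod) : Prop :=
  exists (i1 : 'M[F]_(fdim A, fdim B)) (i2 : 'M[F]_(fdim C, fdim B))
         (p1 : 'M[F]_(fdim B, fdim A)) (p2 : 'M[F]_(fdim B, fdim C)),
    [/\ is_hom i1, is_hom i2, is_hom p1 & is_hom p2] /\
    [/\ i1 *m p1 = 1%:M, i2 *m p2 = 1%:M &
        p1 *m i1 + p2 *m i2 = 1%:M].

Definition dsum_closed (P : mod -> Prop) : Prop :=
  forall A C B, is_dsum A C B -> P A -> P C -> P B.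

End Modules.

(* Main.v *)
Require Import Defs.
From mathcomp Require Import all_boot all_order all_algebra falgebra reals.
Set Implicit Arguments. Unset Strict Implicit. Unset Printing Implicit Defensive.
Import Order.TTheory GRing.Theory Num.Theory.
Local Open Scope ring_scope.

Section Infra.
Variables (F : fieldType) (L : falgType F).
Local Notation mod := (fmod L).

Definition stable (B : mod) m (U : 'M[F]_(m, fdim B)) :=
  forall a, (U *m fact B a <= U)%MS.

Lemma stable_eq (B : mod) m1 m2 (U : 'M_(m1, fdim B)) (V : 'M_(m2, fdim B)) :
  stable U -> (U == V)%MS -> stable V.
Proof.
move=> sU /eqmxP eUV a.
by rewrite -(eqmxMr _ eUV) -eUV; exact: sU.
Qed.

Lemma stable_hom (M B : mod) (f : 'M_(fdim M, fdim B)) : is_hom f -> stable f.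
Proof. by move=> hf a; rewrite -hf submxMl. Qed.

Lemma stable_ker (B Q : mod) (g : 'M_(fdim B, fdim Q)) : is_hom g -> stable (kermx g).
Proof.
move=> hg a; apply/sub_kermxP; rewrite -mulmxA hg mulmxA.
by rewrite mulmx_ker mul0mx.
Qed.

Lemma stable_cap (B : mod) m1 m2 (U : 'M_(m1, fdim B)) (V : 'M_(m2, fdim B)) :
  stable U -> stable V -> stable (U :&: V)%MS.
Proof.
move=> sU sV a; rewrite sub_capmx.
apply/andP; split.
  by apply: submx_trans (sU a); apply: submxMr; apply: capmxSl.
by apply: submx_trans (sV a); apply: submxMr; apply: capmxSr.
Qed.

Section Sub.
Variables (B : mod) (m : nat) (U : 'M[F]_(m, fdim B)) (sU : stable U).
Let X := row_base U.

Lemma sub_key a : X *m fact B a *m pinvmx X *m X = X *m fact B a.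
Proof.
apply: mulmxKpV.
have e := eq_row_base U.
rewrite (eqmxMr _ e) e; exact: sU.
Qed.

Definition sfact (a : L) : 'M[F]_(\rank U) := X *m fact B a *m pinvmx X.

Lemma sfact_lin k a b : sfact (k *: a + b) = k *: sfact a + sfact b.
Proof. by rewrite /sfact fact_lin mulmxDr mulmxDl; congr (_ + _); rewrite -scalemxAr -scalemxAl. Qed.

Lemma sfact_one : sfact 1 = 1%:M.
Proof. by rewrite /sfact fact_one mulmx1 mulmxVp ?row_base_free. Qed.

Lemma sfact_mul a b : sfact (a * b) = sfact a *m sfact b.
Proof. by rewrite /sfact fact_mul [RHS]mulmxA [X *m fact B a *m pinvmx X *m (X *m _)]mulmxA sub_key mulmxA. Qed.

Definition submod : mod := FMod sfact_lin sfact_one sfact_mul.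

Lemma submod_hom : @is_hom F L submod B X.
Proof. by move=> a; rewrite /= sub_key. Qed.
End Sub.

Section Quot.
Variables (B : mod) (k : nat) (g : 'M[F]_(fdim B, k)) (fg : row_full g)
  (sK : stable (kermx g)).
Let P := pinvmx g.

Lemma Pg : P *m g = 1%:M.
Proof. by have := mulmxKpV (submx_full 1%:M fg); rewrite mul1mx. Qed.

Lemma quot_key a : g *m (P *m fact B a *m g) = fact B a *m g.
Proof.
have D0 : (g *m P - 1%:M) *m g = 0.
  by rewrite mulmxBl -mulmxA Pg mulmx1 mul1mx subrr.
have : (g *m P - 1%:M <= kermx g)%MS by apply/sub_kermxP.
move/(submxMr (fact B a)) => /submx_trans /(_ (sK a)) /sub_kermxP.
rewrite mulmxBl mul1mx mulmxBl => /eqP; rewrite subr_eq0 => /eqP <-.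
by rewrite mulmxA mulmxA.
Qed.

Definition qfact (a : L) : 'M[F]_k := P *m fact B a *m g.

Lemma qfact_lin c a b : qfact (c *: a + b) = c *: qfact a + qfact b.
Proof. by rewrite /qfact fact_lin mulmxDr mulmxDl; congr (_ + _); rewrite -scalemxAr -scalemxAl. Qed.

Lemma qfact_one : qfact 1 = 1%:M.
Proof. by rewrite /qfact fact_one mulmx1 Pg. Qed.

Lemma qfact_mul a b : qfact (a * b) = qfact a *m qfact b.
Proof. by rewrite /qfact fact_mul -[RHS]mulmxA quot_key !mulmxA. Qed.

Definition qmod : mod := FMod qfact_lin qfact_one qfact_mul.

Lemma qmod_hom : @is_hom F L B qmod g.
Proof. by move=> a; rewrite /= quot_key. Qed.
End Quot.


Lemma hom_comp (A B C : mod) (f : 'M_(fdim A, fdim B)) (g : 'M_(fdim B, fdim C)) :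
  is_hom f -> is_hom g -> is_hom (f *m g).
Proof. by move=> hf hg a; rewrite mulmxA hf -mulmxA hg mulmxA. Qed.

Lemma row_full_mul m n p (A : 'M[F]_(m, n)) (B : 'M[F]_(n, p)) :
  row_full A -> row_full B -> row_full (A *m B).
Proof.
move=> /row_fullP [A' hA] /row_fullP [B' hB]; apply/row_fullP.
exists (B' *m A'); by rewrite mulmxA -[B' *m A' *m A]mulmxA hA mulmx1 hB.
Qed.

Lemma row_free_mulr m n p (A : 'M[F]_(m, n)) (B : 'M[F]_(n, p)) :
  row_free (A *m B) -> row_free A.
Proof.
rewrite /row_free => /eqP h; rewrite eqn_leq rank_leq_row /= -{1}h.
exact: mxrankM_maxl.
Qed.

Lemma row_full_mull m n p (A : 'M[F]_(m, n)) (B : 'M[F]_(n, p)) :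
  row_full (A *m B) -> row_full B.
Proof.
rewrite /row_full => /eqP h; rewrite eqn_leq rank_leq_col /= -{1}h.
exact: mxrankM_maxr.
Qed.

Lemma factor_hom (M S B : mod) (f : 'M_(fdim M, fdim B)) (X : 'M_(fdim S, fdim B)) :
  is_hom f -> is_hom X -> row_free X -> (f <= X)%MS ->
  is_hom (f *m pinvmx X) /\ f *m pinvmx X *m X = f.
Proof.
move=> hf hX fX sfX; have e := mulmxKpV sfX; split=> // a.
apply: (row_free_inj fX); rewrite /= -mulmxA e -mulmxA hX mulmxA e.
exact: hf.
Qed.

Lemma kermx_mulfree m n p (A : 'M[F]_(m, n)) (Y : 'M[F]_(n, p)) :
  row_free Y -> (kermx (A *m Y) == kermx A)%MS.
Proof.
move=> fY; apply/andP; split; apply/sub_kermxP.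
  by apply/eqP; rewrite -(mulmx_free_eq0 _ fY) -mulmxA mulmx_ker.
by rewrite mulmxA mulmx_ker mul0mx.
Qed.

Lemma kermx_colbase m n (A : 'M[F]_(m, n)) : (kermx (col_base A) == kermx A)%MS.
Proof.
have := kermx_mulfree (col_base A) (row_base_free A).
by rewrite mulmx_base => /andP[h1 h2]; apply/andP.
Qed.

Section Image.
Variables (M Q : mod) (phi : 'M[F]_(fdim M, fdim Q)) (hphi : is_hom phi).

Lemma im_stable : stable (kermx (col_base phi)).
Proof.
apply: stable_eq (stable_ker hphi) _.
by have /andP[h1 h2] := kermx_colbase phi; apply/andP.
Qed.

Definition imod : mod := qmod (col_base_full phi) im_stable.

Lemma imod_q_hom : @is_hom F L M imod (col_base phi).
Proof. exact: qmod_hom. Qed.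

Lemma imod_i_hom : @is_hom F L imod Q (row_base phi).
Proof.
move=> a; have /row_fullP [C hC] := col_base_full phi.
have inj p (Y Z : 'M_(\rank phi, p)) : col_base phi *m Y = col_base phi *m Z -> Y = Z.
  by move=> e; rewrite -[Y]mul1mx -hC -mulmxA e mulmxA hC mul1mx.
apply: inj; rewrite mulmxA -imod_q_hom -mulmxA mulmx_base hphi.
by rewrite mulmxA mulmx_base.
Qed.
End Image.

Lemma mxdim0 m n (A B : 'M[F]_(m, n)) : n = 0%N -> A = B.
Proof. by move=> h; move: A B; rewrite h => A B; rewrite !thinmx0. Qed.


Section WithG.
Variables (G : mod -> Prop) (tG : torsion_class G).

Lemma G_quot (B Q : mod) (g : 'M_(fdim B, fdim Q)) :
  is_hom g -> row_full g -> G B -> G Q.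
Proof. by case: tG => _ _ _; apply. Qed.

Lemma G_ext A B C f g : @ses F L A B C f g -> G A -> G C -> G B.
Proof. by case: tG => _ _ h _; apply: h. Qed.

Lemma G_iso M N : isomorphic M N -> G M -> G N.
Proof. by case: tG => _ h _ _; apply: h. Qed.

Lemma sub_in_eq (B : mod) m1 m2 (U : 'M_(m1, fdim B)) (V : 'M_(m2, fdim B)) :
  sub_in G U -> (U == V)%MS -> sub_in G V.
Proof.
move=> [M [f [hf ff eU GM]]] eUV; exists M, f; split=> //.
move/eqmxP: eU => eU; move/eqmxP: eUV => eUV; apply/eqmxP; exact: eqmx_trans eU eUV.
Qed.

Lemma sub_in_stable (B : mod) m (U : 'M_(m, fdim B)) : sub_in G U -> stable U.
Proof. by move=> [M [f [hf ff eU GM]]]; apply: stable_eq (stable_hom hf) eU. Qed.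

Lemma G_submod (B : mod) m (U : 'M_(m, fdim B)) (sU : stable U) :
  sub_in G U -> G (submod sU).
Proof.
move=> [M [f [hf ff eU GM]]]; apply: G_iso GM.
have sfX : (f <= row_base U)%MS.
  by move/eqmxP: eU => ->; rewrite (eq_row_base U) submx_refl.
have [hphi ephi] := factor_hom hf (submod_hom sU) (row_base_free U) sfX.
exists (f *m pinvmx (row_base U)); split=> //.
  by apply: (@row_free_mulr _ _ _ _ (row_base U)); rewrite ephi.
rewrite /row_full /= -(mxrankMfree _ (row_base_free U)) ephi.
by move/eqmxP: eU => ->.
Qed.

Lemma sub_in_submod (B : mod) m (U : 'M_(m, fdim B)) (sU : stable U) :
  G (submod sU) -> sub_in G U.
Proof.
move=> GS; exists (submod sU), (row_base U); split=> //.
- exact: submod_hom.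
- exact: row_base_free.
- by apply/eqmxP; exact: eq_row_base.
Qed.

Lemma sub_in_image (M Q : mod) (phi : 'M_(fdim M, fdim Q)) :
  is_hom phi -> G M -> sub_in G phi.
Proof.
move=> hphi GM; exists (imod hphi), (row_base phi); split.
- exact: imod_i_hom.
- exact: row_base_free.
- by apply/eqmxP; exact: eq_row_base.
- exact: G_quot (imod_q_hom hphi) (col_base_full phi) GM.
Qed.

Lemma sub_in_mul (A B : mod) m (U : 'M_(m, fdim A)) (f : 'M_(fdim A, fdim B)) :
  sub_in G U -> is_hom f -> sub_in G (U *m f).
Proof.
move=> [N [e [he fe eU GN]]] hf.
apply: sub_in_eq (sub_in_image (hom_comp he hf) GN) _.
by apply/eqmxP; apply: eqmxMr; apply/eqmxP.
Qed.

Lemma sub_in_back (A B : mod) m (K : 'M_(m, fdim A)) (f : 'M_(fdim A, fdim B)) :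
  is_hom f -> row_free f -> sub_in G (K *m f) -> sub_in G K.
Proof.
move=> hf ff [N [e [he fe eK GN]]].
have sef : (e <= f)%MS.
  by move/eqmxP: eK => ->; apply: submxMl.
have [hpsi epsi] := factor_hom he hf ff sef.
exists N, (e *m pinvmx f); split=> //.
  by apply: (@row_free_mulr _ _ _ _ f); rewrite epsi.
apply/eqmxP; apply: (eqmxMfree ff); rewrite epsi; exact/eqmxP.
Qed.


Lemma sub_ext (M Q : mod) (g : 'M_(fdim M, fdim Q)) k (T : 'M_(k, fdim M)) :
  is_hom g -> stable T -> sub_in G (T :&: kermx g)%MS -> sub_in G (T *m g) ->
  sub_in G T.
Proof.
move=> hg sT [NA [fA [hA frA eA GA]]] [NC [fC [hC frC eC GC]]].

apply: (sub_in_submod (sU := sT)).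
have hX := submod_hom sT; have frX := row_base_free T.
have eXT : (row_base T :=: T)%MS := eq_row_base T.
move/eqmxP: eA => eA; move/eqmxP: eC => eC.
have sA : (fA <= row_base T)%MS by rewrite eA eXT capmxSl.
have [hal eal] := factor_hom hA hX frX sA.
have eXg : (row_base T *m g :=: T *m g)%MS := eqmxMr g eXT.
have sC : (row_base T *m g <= fC)%MS by rewrite eXg eC submx_refl.
have [hbe ebe] := factor_hom (hom_comp hX hg) hC frC sC.

apply: (G_ext (A := NA) (B := submod sT) (C := NC) (f := fA *m pinvmx (row_base T))
              (g := row_base T *m g *m pinvmx fC)) => //.
split=> //.
- by apply: (@row_free_mulr _ _ _ _ (row_base T)); rewrite eal.
- have sC' : (fC <= row_base T *m g)%MS by rewrite eXg eC submx_refl.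
  have hZ := mulmxKpV sC'.
  apply/row_fullP; exists (fC *m pinvmx (row_base T *m g)).
  by apply: (row_free_inj frC); rewrite -mulmxA ebe hZ mul1mx.
- apply/andP; split.
    apply/sub_kermxP; apply/eqP.
    rewrite -(mulmx_free_eq0 _ frC) -mulmxA ebe mulmxA eal -sub_kermx.
    by rewrite eA capmxSr.
  set K := kermx _.
  have K0 : K *m row_base T *m g = 0.
    apply/eqP; rewrite -mulmxA -ebe mulmxA -[K *m _ *m _]mulmxA.
    by rewrite mulmxA mulmx_ker mul0mx.
  rewrite -(submxMfree _ _ frX) eal eA sub_capmx; apply/andP; split.
    by rewrite -eXT submxMl.
  exact/sub_kermxP.
Qed.

End WithG.
End Infra.

Section Infra2.
Variables (F : fieldType) (L : falgType F).
Local Notation mod := (fmod L).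

Lemma pull_cap x y p n k (X : 'M[F]_(x, p)) (f : 'M[F]_(p, n)) (g : 'M[F]_(n, k))
  (Y : 'M[F]_(y, n)) :
  (kermx g == Y)%MS -> (((kermx (f *m g)) :&: X) *m f == Y :&: (X *m f))%MS.
Proof.
move/eqmxP=> eY; apply/andP; split.
  rewrite sub_capmx; apply/andP; split.
    rewrite -eY; apply/sub_kermxP; rewrite -mulmxA.
    apply/sub_kermxP; apply: submx_trans (capmxSl _ _) _; exact: submx_refl.
  by apply: submxMr; apply: capmxSr.
set Z := (Y :&: X *m f)%MS.
have sZ : (Z <= X *m f)%MS := capmxSr _ _.
have [D eD] := submxP sZ.
have hY : (Z <= Y)%MS := capmxSl _ _.
rewrite eD mulmxA; apply: submxMr; rewrite sub_capmx; apply/andP; split.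
  apply/sub_kermxP; rewrite mulmxA -[D *m X *m f]mulmxA -eD.
  by apply/sub_kermxP; rewrite eY.
exact: submxMl.
Qed.

Lemma kermx_coker m n (U : 'M[F]_(m, n)) : (kermx (cokermx U) == U)%MS.
Proof.
have sU : (U <= kermx (cokermx U))%MS by apply/sub_kermxP; exact: mulmx_coker.
suff: (U == kermx (cokermx U))%MS by case/andP=> *; apply/andP.
case: (mxrank_leqif_eq sU) => _ <-.
by rewrite mxrank_ker mxrank_coker subKn ?rank_leq_col.
Qed.

Section QuotU.
Variables (B : mod) (m : nat) (U : 'M[F]_(m, fdim B)) (sU : stable U).

Lemma kerU : (kermx (col_base (cokermx U)) == U)%MS.
Proof.
have /eqmxP e1 := kermx_colbase (cokermx U).
apply/eqmxP; apply: eqmx_trans e1 _; apply/eqmxP; exact: kermx_coker.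
Qed.

Lemma qU_stable : stable (kermx (col_base (cokermx U))).
Proof.
by apply: stable_eq sU _; have /andP[h1 h2] := kerU; apply/andP.
Qed.

Definition qmodU : mod := qmod (col_base_full (cokermx U)) qU_stable.

Lemma qmodU_hom : @is_hom F L B qmodU (col_base (cokermx U)).
Proof. exact: qmod_hom. Qed.
End QuotU.

Definition zfact (a : L) : 'M[F]_0 := 0.
Lemma zfact_lin k a b : zfact (k *: a + b) = k *: zfact a + zfact b.
Proof. by rewrite /zfact scaler0 addr0. Qed.
Lemma zfact_one : zfact 1 = 1%:M.
Proof. by rewrite /zfact (thinmx0 1%:M). Qed.
Lemma zfact_mul a b : zfact (a * b) = zfact a *m zfact b.
Proof. by rewrite /zfact mul0mx. Qed.
Definition zmod : mod := FMod zfact_lin zfact_one zfact_mul.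

Lemma ses_dim A B C f g : @ses F L A B C f g -> fdim B = (fdim A + fdim C)%N.
Proof.
case=> _ _ ff fg e.
have h1 := eqmx_rank e; move/eqP: ff => ff; move/eqP: fg => fg.
rewrite mxrank_ker fg ff in h1.
have := rank_leq_row g; rewrite fg => h2.
by rewrite h1 subnK.
Qed.

Lemma theta0 (R : realType) (theta : mod -> R) (Q : mod) :
  additive_fun theta -> fdim Q = 0%N -> theta Q = 0.
Proof.
move=> ad h.
have hom1 : is_hom (1%:M : 'M[F]_(fdim Q)) by move=> a; rewrite mulmx1 mul1mx.
have e : theta Q = theta Q + theta Q.
  apply: (ad Q Q Q 1%:M 1%:M); split=> //.
  - by rewrite row_free_unit unitmx1.
  - by rewrite row_full_unit unitmx1.
  - by rewrite (mxdim0 (kermx 1%:M) 1%:M h); apply/andP; split; exact: submx_refl.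
have := congr1 (fun x => x - theta Q) e; rewrite addrK subrr => <- //.
Qed.

End Infra2.

Section Main.
Variables (F : fieldType) (L : falgType F).
Local Notation mod := (fmod L).
Variables (G : mod -> Prop) (tG : torsion_class G).

Lemma eqS m1 m2 n (A : 'M[F]_(m1, n)) (B : 'M[F]_(m2, n)) :
  (A == B)%MS -> (B == A)%MS.
Proof. by case/andP=> *; apply/andP. Qed.

Lemma eqT m1 m2 m3 n (A : 'M[F]_(m1, n)) (B : 'M[F]_(m2, n)) (C : 'M[F]_(m3, n)) :
  (A == B)%MS -> (B == C)%MS -> (A == C)%MS.
Proof. move=> /eqmxP e1 /eqmxP e2; apply/eqmxP; exact: eqmx_trans e1 e2. Qed.

Lemma eqR m1 n (A : 'M[F]_(m1, n)) : (A == A)%MS.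
Proof. by apply/andP; split; exact: submx_refl. Qed.

Lemma sq_trans (M Q Q2 : mod) :
  strict_quot G M Q -> strict_quot G Q Q2 -> strict_quot G M Q2.
Proof.
move=> [m [U [g [[sobU strU] [hg fg kg]]]]] [m' [V [h [[sobV strV] [hh fh kh]]]]].
have hgh := hom_comp hg hh.
exists _, (kermx (g *m h)), (g *m h); split; last first.
  by split=> //; [exact: row_full_mul | exact: eqR].
have sW := stable_ker hgh.
have kg' := kg; move/eqmxP: kg' => kg'.
have kU : U *m g = 0 by apply/sub_kermxP; rewrite kg' submx_refl.
have UW : (U <= kermx (g *m h))%MS by apply/sub_kermxP; rewrite mulmxA kU mul0mx.
split.
  apply: (sub_ext tG hg sW).
    apply: sub_in_eq sobU _; apply/andP; split.
      by rewrite sub_capmx UW -kg' submx_refl.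
    by rewrite -kg' capmxSr.
  apply: sub_in_eq sobV _; apply: eqS.
  have := pull_cap 1%:M g kh; rewrite capmx1 mul1mx => e.
  apply: eqT e _; apply/eqmxP; apply/capmx_idPl; exact: submx_full.
move=> m2 U' sobU'.
apply: (sub_ext tG hg (stable_cap sW (sub_in_stable sobU'))).
  apply: sub_in_eq (strU _ _ sobU') _; apply/andP; split.
    rewrite !sub_capmx; apply/andP; split.
      apply/andP; split; last exact: capmxSr.
      by apply: submx_trans (capmxSl _ _) UW.
    by rewrite kg' capmxSl.
  rewrite sub_capmx; apply/andP; split.
    by rewrite -kg' capmxSr.
  by apply: submx_trans (capmxSl _ _) (capmxSr _ _).
apply: sub_in_eq (strV _ _ (sub_in_mul tG sobU' hg)) _.
exact: eqS (pull_cap U' g kh).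
Qed.


Lemma lcancel_full m n p (g : 'M[F]_(m, n)) (Y Z : 'M[F]_(n, p)) :
  row_full g -> g *m Y = g *m Z -> Y = Z.
Proof.
move=> fg e; have := mulmxKpV (submx_full 1%:M fg); rewrite mul1mx => Pg.
by rewrite -[Y]mul1mx -[Z]mul1mx -Pg -!mulmxA e.
Qed.

Lemma ext_split (R : realType) (theta : mod -> R) (ad : additive_fun theta)
  A B C f g (s : @ses F L A B C f g) (GA : G A) (GC : G C) (Q : mod) :
  strict_quot G B Q ->
  exists I Q3, [/\ strict_quot G A I, strict_quot G C Q3,
                   theta Q = theta I + theta Q3 & fdim Q = (fdim I + fdim Q3)%N].
Proof.
have [hf hg ff fg kfg] := s.
move=> [m [U [gU [[sobU strU] [hgU fgU kgU]]]]].
have hphi := hom_comp hf hgU.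
have hi := imod_i_hom hphi.
have hh := qmodU_hom (stable_hom hi).
have kh := kerU (row_base (f *m gU)).
have sesI : @ses F L (imod hphi) Q (qmodU (stable_hom hi)) (row_base (f *m gU)) (col_base (cokermx (row_base (f *m gU)))).
  split=> //; [exact: row_base_free | exact: col_base_full | exact: eqS kh].
have sobf : sub_in G f by exists A, f; split=> //; exact: eqR.
have fg0 : f *m g = 0 by apply/sub_kermxP; case/andP: kfg.
move/eqmxP: (kfg) => kg.
exists (imod hphi), (qmodU (stable_hom hi)); split.
- exists _, (kermx (f *m gU)), (col_base (f *m gU)); split; last first.
    split; [exact: imod_q_hom | exact: col_base_full | exact: kermx_colbase].
  split; rewrite /subobj.
    apply: (sub_in_back hf ff); apply: sub_in_eq (strU _ _ sobf) _.
    by apply: eqS; have := pull_cap 1%:M f kgU; rewrite capmx1 mul1mx.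
  move=> m2 A' sobA'; rewrite /subobj; apply: (sub_in_back hf ff).
  exact: sub_in_eq (strU _ _ (sub_in_mul tG sobA' hf)) (eqS (pull_cap A' f kgU)).
- set phi := f *m gU; set h := col_base (cokermx (row_base phi)).
  set om := gU *m h.
  have hom_om : @is_hom F L B (qmodU (stable_hom hi)) om := hom_comp hgU hh.
  have fom : row_full om := row_full_mul fgU (col_base_full _).
  have fom0 : f *m om = 0.
    have e : phi *m h = col_base phi *m (row_base phi *m h).
      by rewrite mulmxA mulmx_base.
    rewrite mulmxA -/phi e.
    have -> : row_base phi *m h = 0 by apply/sub_kermxP; case/andP: kh.
    by rewrite mulmx0.
  set P := pinvmx g.
  have Pg : P *m g = 1%:M by have := mulmxKpV (submx_full 1%:M fg); rewrite mul1mx.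
  have gpsi : g *m (P *m om) = om.
    have : (g *m P - 1%:M <= f)%MS.
      rewrite kg; apply/sub_kermxP.
      by rewrite mulmxBl -mulmxA Pg mulmx1 mul1mx subrr.
    case/submxP=> D eD.
    apply/eqP; rewrite mulmxA -subr_eq0 -{2}[om]mul1mx -mulmxBl eD.
    by rewrite -mulmxA fom0 mulmx0.
  exists _, (U *m g), (P *m om); split; last first.
    split.
    + move=> a; apply: (lcancel_full fg).
      by rewrite [LHS]mulmxA -hg -[LHS]mulmxA gpsi hom_om [RHS]mulmxA gpsi.
    + by apply: (row_full_mull (A := g)); rewrite gpsi.
    + apply/andP; split.
        set K := kermx _.
        have [D eD] := submxP (submx_full K fg).
        have D0 : D *m om = 0.
          by rewrite -gpsi mulmxA -eD mulmx_ker.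
        have : (D <= U + f)%MS.
          set E := D *m gU *m pinvmx phi.
          have sDg : (D *m gU <= phi)%MS.
            have e0 := eq_row_base phi.
            move/eqmxP: (kh) => kh'.
            by rewrite -e0 -kh'; apply/sub_kermxP; rewrite -mulmxA; exact: D0.
          have eE := mulmxKpV sDg.
          rewrite -[D](subrK (E *m f)); apply: addmx_sub_adds; last exact: submxMl.
          move/eqmxP: (kgU) => kgU'.
          rewrite -kgU'; apply/sub_kermxP.
          by rewrite mulmxBl -mulmxA -/phi eE subrr.
        move/(submxMr g); rewrite -eD => sK.
        apply: submx_trans sK _.
        rewrite addsmxMr addsmx_sub submx_refl fg0 /=; exact: sub0mx.
      apply/sub_kermxP; rewrite -mulmxA gpsi mulmxA.
      have -> : U *m gU = 0 by apply/sub_kermxP; case/andP: kgU => _.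
      by rewrite mul0mx.
  split; rewrite /subobj.
    apply: (sub_in_mul tG (A := B) (B := C)); [exact: sobU | exact: hg].
  move=> m2 C' sobC'.
  have sC' := sub_in_stable sobC'.
  have eCC := kermx_coker C'.
  have sPre : stable (kermx (g *m cokermx C')).
    move=> a; apply/sub_kermxP.
    have : (kermx (g *m cokermx C') *m g <= C')%MS.
      by rewrite submxE -mulmxA mulmx_ker.
    move/(submxMr (fact C a))/submx_trans/(_ (sC' a)).
    rewrite submxE => /eqP H.
    rewrite mulmxA -[_ *m fact B a *m g]mulmxA hg.
    by rewrite [_ *m (g *m _)]mulmxA.
  have sobPre : sub_in G (kermx (g *m cokermx C')).
    apply: (sub_ext tG hg sPre).
      apply: sub_in_eq sobf _; apply/andP; split.
        rewrite sub_capmx; apply/andP; split; last by rewrite -kg submx_refl.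
        by apply/sub_kermxP; rewrite mulmxA fg0 mul0mx.
      by rewrite kg capmxSr.
    apply: sub_in_eq sobC' _; apply: eqS.
    have := pull_cap 1%:M g eCC; rewrite capmx1 mul1mx => e.
    apply: eqT e _; apply/eqmxP; apply/capmx_idPl; exact: submx_full.
  have := sub_in_mul tG (strU _ _ sobPre) hg.
  rewrite capmxC => h1; apply: sub_in_eq h1 _.
  by have := pull_cap U g eCC; rewrite [(C' :&: _)%MS]capmxC.
- exact: (ad _ _ _ _ _ sesI).
- exact: ses_dim sesI.
Qed.

End Main.

Section Final.
Variables (F : fieldType) (L : falgType F).
Local Notation mod := (fmod L).

Lemma dsum_ses (A C B : mod) : is_dsum A C B -> exists f g, @ses F L A B C f g.
Proof.
move=> [i1 [i2 [p1 [p2 [[h1 h2 h3 h4] [e1 e2 e3]]]]]].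
have X0 : i1 *m p2 = 0.
  have : i1 *m p2 = i1 *m p2 + i1 *m p2.
    rewrite -{1}[i1]mulmx1 -e3 mulmxDr mulmxDl.
    by rewrite !mulmxA e1 mul1mx -[i1 *m p2 *m i2 *m p2]mulmxA e2 mulmx1.
  move=> e; have := congr1 (fun y => y - i1 *m p2) e.
  by rewrite addrK subrr => <-.
exists i1, p2; split=> //.
- by apply/row_freeP; exists p1.
- by apply/row_fullP; exists i2.
- apply/andP; split; first by apply/sub_kermxP.
  apply/submxP; exists (kermx p2 *m p1).
  rewrite -{1}[kermx p2]mulmx1 -e3 mulmxDr !mulmxA mulmx_ker mul0mx addr0.
  by [].
Qed.

End Final.

From mathcomp Require Import lra.
Unset Implicit Arguments.

Theorem mainTheorem11 (F : fieldType) (L : falgType F) (G : fmod L -> Prop)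
  (R : realType) (theta : fmod L -> R) :
  torsion_class G -> additive_fun theta ->
  [/\ pseudo_torsion G (Pth G theta), pseudo_torsion G (Pbar G theta),
      ext_closed (Pth G theta) & ext_closed (Pbar G theta)] /\
  (dsum_closed (Pth G theta) /\ dsum_closed (Pbar G theta)).
Proof.
move=> tG ad.
have GZ : G (zmod L).
  case: (tG) => [[M0 GM0] _ _ _].
  apply: (G_quot tG (B := M0) (Q := zmod L) (g := 0 : 'M_(fdim M0, fdim (zmod L)))) => //.
    by move=> a; apply: mxdim0.
  by rewrite /row_full mxrank0.
have zq : forall Q, strict_quot G (zmod L) Q -> fdim Q = 0%N.
  move=> Q [m [U [g [_ [_ fg _]]]]].
  move/eqP: fg => <-; apply/eqP; rewrite -leqn0; exact: rank_leq_row.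
have sqG : forall M Q, G M -> strict_quot G M Q -> G Q.
  by move=> M Q GM [m [U [g [_ [hg fg _]]]]]; exact: (G_quot tG hg fg GM).
have nn : forall (P : fmod L -> Prop) (X : fmod L),
    (forall Q, P Q -> (0 < fdim Q)%N -> 0 < theta Q) -> P X -> 0 <= theta X.
  move=> P X hP PX; case: (posnP (fdim X)) => [z | p].
    by rewrite (theta0 ad z).
  exact: ltW (hP _ PX p).
have extP : ext_closed (Pth G theta).
  move=> A B C f g s [GA hA] [GC hC]; split; first exact: (G_ext tG s GA GC).
  move=> Q sq pos.
  have [I [Q3 [sI sQ3 e ed]]] := ext_split tG ad s GA GC sq.
  have n1 := nn _ _ hA sI; have n2 := nn _ _ hC sQ3.
  rewrite e; case: (posnP (fdim I)) => [z | p].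
    have p3 : (0 < fdim Q3)%N by rewrite ed z in pos.
    have := hC _ sQ3 p3; lra.
  have := hA _ sI p; lra.
have extB : ext_closed (Pbar G theta).
  move=> A B C f g s [GA hA] [GC hC]; split; first exact: (G_ext tG s GA GC).
  move=> Q sq.
  have [I [Q3 [sI sQ3 e ed]]] := ext_split tG ad s GA GC sq.
  have := hA _ sI; have := hC _ sQ3; rewrite e; lra.
split; last first.
  split=> A C B /dsum_ses [f [g s]]; [exact: extP s | exact: extB s].
split=> //.
- split.
  + exists (zmod L); split=> // Q sq; by rewrite (zq Q sq).
  + by move=> M [].
  + move=> M Q [GM hM] sq; split; first exact: (sqG _ _ GM sq).
    by move=> Q2 sq2; apply: hM; exact: (sq_trans tG sq sq2).
  + by move=> A B C f g [s _ _ _ _]; exact: extP s.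
- split.
  + exists (zmod L); split=> // Q sq; by rewrite (theta0 ad (zq Q sq)).
  + by move=> M [].
  + move=> M Q [GM hM] sq; split; first exact: (sqG _ _ GM sq).
    by move=> Q2 sq2; apply: hM; exact: (sq_trans tG sq sq2).
  + by move=> A B C f g [s _ _ _ _]; exact: extB s.
Qed.
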